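(* Let $\phi$ be a norm-to-weak continuous cocycle with respect to $\theta$ on $\mathbb{R}^+\times\Sigma\times X$ such that $(\phi,\theta)$ has a nested bounded pullback absorbing set. Then the following are equivalent: (a) $(\phi,\theta)$ has a pullback attractor; (b) $\phi$ is pullback $\kappa$-contracting; (c) $\phi$ is pullback asymptotically compact.
   Context: Let $X$ be a Banach space with norm $\|\cdot\|$. Let $\Sigma$ be a set and $\theta=\{\theta_t\}_{t\in\mathbb{R}}$ a group of bijections $\theta_t:\Sigma\to\Sigma$ with $\theta_0=\mathrm{id}$ and $\theta_{t+\tau}=\theta_t\circ\theta_\tau$. A cocycle with respect to $\theta$ is a map $\phi:\mathbb{R}^+\times\Sigma\times X\to X$ with $\phi(0,\sigma;x)=x$ and $\phi(s+t,\sigma;x)=\phi(s,\theta_t(\sigma);\phi(t,\sigma;x))$ for all $s,t\ge 0$; it is norm-to-weak continuous if for each $t\ge0$, $\sigma\in\Sigma$, $x_n\to x$ in norm implies $\phi(t,\sigma;x_n)\rightharpoonup\phi(t,\sigma;x)$ weakly in $X$. For $B\subset X$, $\phi(t,\sigma;B)=\{\phi(t,\sigma;x):x\in B\}$, and $\mathrm{dist}_X(A,C)=\sup_{a\in A}\inf_{c\in C}\|a-c\|$. A bounded pullback absorbing set is a family $\{B_\sigma\}_{\sigma\in\Sigma}$ of bounded subsets of $X$ such that for every $\sigma$ and bounded $B\subset X$ there is $T\ge0$ with $\phi(t,\theta_{-t}(\sigma);B)\subset B_\sigma$ for all $t\ge T$; it is nested if moreover $B_{\theta_{-t}(\sigma)}\subset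 B_\sigma$ for all $t\ge0$, $\sigma\in\Sigma$. A pullback attractor is a family $\{\mathcal{A}_\sigma\}_{\sigma\in\Sigma}$ of nonempty compact sets with $\phi(t,\sigma;\mathcal{A}_\sigma)=\mathcal{A}_{\theta_t(\sigma)}$ for all $t\ge0$, $\sigma$, and $\lim_{t\to+\infty}\mathrm{dist}_X(\phi(t,\theta_{-t}(\sigma);B),\mathcal{A}_\sigma)=0$ for every $\sigma$ and bounded $B$. The Kuratowski measure $\kappa(A)=\inf\{\delta>0: A$ has a finite cover by sets of diameter $<\delta\}$; $\phi$ is pullback $\kappa$-contracting if for all $\varepsilon>0$, $\sigma$, bounded $B$ there is $T$ with $\kappa(\phi(t,\theta_{-t}(\sigma);B))\le\varepsilon$ for $t\ge T$. $\phi$ is pullback asymptotically compact if for each $\sigma\in\Sigma$, every bounded sequence $\{x_n\}\subset X$ and every $\{t_n\}\subset\mathbb{R}^+$ with $t_n\to+\infty$, the sequence $\{\phi(t_n,\theta_{-t_n}(\sigma);x_n)\}$ is precompact in $X$. *)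

(* Defs.v *)
From HB Require Import structures.
From mathcomp Require Import all_boot all_order all_algebra.
From mathcomp Require Import all_classical all_reals all_analysis.
Set Implicit Arguments. Unset Strict Implicit. Unset Printing Implicit Defensive.
Import Order.TTheory GRing.Theory Num.Theory.
Import numFieldNormedType.Exports.
Local Open Scope classical_set_scope.
Local Open Scope ring_scope.

Section Defs.
Context {R : realType} {X : normedModType R}.

Definition bnd (B : set X) : Prop := exists M : R, forall x, B x -> `|x| <= M.

Definition weak_cvg (u : nat -> X) (y : X) : Prop :=
  forall f : X -> R,
    (forall a b, f (a + b) = f a + f b) ->
    (forall (k : R) a, f (k *: a) = k * f a) ->
    continuous f ->
    f (u n) @[n --> \oo] --> f y.

Definition hdist (A C : set X) : \bar R :=
  ereal_sup [set ereal_inf [set (`|a - c|)%:E | c in C] | a in A].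

Definition diam (A : set X) : \bar R :=
  ereal_sup [set (`|x - y|)%:E | x in A & y in A].

Definition kuratowski (A : set X) : \bar R :=
  ereal_inf [set d%:E | d in [set d : R | 0 < d /\
     exists (n : nat) (U : nat -> set X),
       A `<=` \bigcup_(i in [set i | (i < n)%N]) U i /\
       (forall i, (i < n)%N -> (diam (U i) < d%:E)%E)]].

End Defs.

Section Dyn.
Context {R : realType} {X : normedModType R} {Sigma : Type}.
Variables (theta : R -> Sigma -> Sigma) (phi : R -> Sigma -> X -> X).

Definition is_group_flow : Prop :=
  (forall t, bijective (theta t)) /\
  theta 0 = id /\ (forall t s, theta (t + s) = theta t \o theta s).

Definition is_cocycle : Prop :=
  (forall s x, phi 0 s x = x) /\
  (forall t u s x, 0 <= t -> 0 <= u ->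
     phi (u + t) s x = phi u (theta t s) (phi t s x)).

Definition norm_to_weak : Prop :=
  forall t s (v : nat -> X) x, 0 <= t ->
    v n @[n --> \oo] --> x ->
    weak_cvg (fun n => phi t s (v n)) (phi t s x).

Definition pullback_absorbing (Bs : Sigma -> set X) : Prop :=
  (forall s, bnd (Bs s)) /\
  (forall s (B : set X), bnd B -> exists T : R, 0 <= T /\
     forall t, T <= t -> phi t (theta (- t) s) @` B `<=` Bs s).

Definition nested (Bs : Sigma -> set X) : Prop :=
  forall t s, 0 <= t -> Bs (theta (- t) s) `<=` Bs s.

Definition pullback_attractor (A : Sigma -> set X) : Prop :=
  (forall s, A s !=set0 /\ compact (A s)) /\
  (forall t s, 0 <= t -> phi t s @` A s = A (theta t s)) /\
  (forall s (B : set X), bnd B ->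
     forall e : R, 0 < e -> \forall t \near +oo,
       (hdist (phi t (theta (- t) s) @` B) (A s) <= e%:E)%E).

Definition kappa_contracting : Prop :=
  forall (e : R) s (B : set X), 0 < e -> bnd B -> exists T : R, 0 <= T /\
    forall t, T <= t -> (kuratowski (phi t (theta (- t) s) @` B) <= e%:E)%E.

Definition asymptotically_compact : Prop :=
  forall s (v : nat -> X) (tn : nat -> R),
    bnd (range v) -> (forall n, 0 <= tn n) -> tn n @[n --> \oo] --> +oo ->
    precompact (range (fun n => phi (tn n) (theta (- tn n) s) (v n))).

End Dyn.

(* Main.v *)
Require Import Defs.
From HB Require Import structures.
From mathcomp Require Import all_boot all_order all_algebra.
From mathcomp Require Import all_classical all_reals all_analysis.
Import Order.TTheory GRing.Theory Num.Theory.
Import numFieldNormedType.Exports.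
Local Open Scope classical_set_scope.
Local Open Scope ring_scope.

From mathcomp Require Import lra ring.
Set Implicit Arguments. Unset Strict Implicit. Unset Printing Implicit Defensive.

Section HBsec.
Context {R : realType} {X : normedModType R}.

Definition goodG (G : set (X * R)) :=
  [/\ (forall x r r', G (x,r) -> G (x,r') -> r = r'),
   (forall x r y s, G (x,r) -> G (y,s) -> G (x+y, r+s)),
   (forall k x r, G (x,r) -> G (k *: x, k * r)) &
   (forall x r, G (x,r) -> r <= `|x|)].

Definition PG (a : X) (G : set (X * R)) := G = set0 \/ (goodG G /\ G (a, `|a|)).

Lemma PG_chain a (F : set (set (X * R))) : F `<=` PG a -> total_on F subset ->
  PG a (\bigcup_(G in F) G).
Proof.
move=> FP Ftot.
have [[G0 FG0 [q G0q]]|] := pselect (exists2 G, F G & G !=set0); last first.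
  move=> nF; left; apply/seteqP; split=> // p [G FG Gp]; apply: nF.
  by exists G => //; exists p.
have mem_good G p : F G -> G p -> goodG G.
  move=> FG Gp; case: (FP _ FG) => [G0e|[]//].
  by move: Gp; rewrite G0e.
have common G1 G2 p1 p2 : F G1 -> F G2 -> G1 p1 -> G2 p2 ->
    exists G, [/\ F G, G p1 & G p2].
  move=> F1 F2 g1 g2; case: (Ftot _ _ F1 F2) => sub.
    by exists G2; split => //; apply: sub.
  by exists G1; split => //; apply: sub.
right; split; last first.
  exists G0 => //; case: (FP _ FG0) => [G0e|[] //].
  by move: G0q; rewrite G0e.
split.
- move=> x r r' [G1 F1 g1] [G2 F2 g2].
  have [G [FG h1 h2]] := common _ _ _ _ F1 F2 g1 g2.
  by have [fn _ _ _] := mem_good _ _ FG h1; apply: fn h1 h2.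
- move=> x r y s [G1 F1 g1] [G2 F2 g2].
  have [G [FG h1 h2]] := common _ _ _ _ F1 F2 g1 g2.
  have [_ ad _ _] := mem_good _ _ FG h1; exists G => //; exact: ad.
- move=> k x r [G1 F1 g1].
  have [_ _ sc _] := mem_good _ _ F1 g1; exists G1 => //; exact: sc.
- move=> x r [G1 F1 g1].
  by have [_ _ _ dm] := mem_good _ _ F1 g1; apply: dm.
Qed.

End HBsec.
Section HBsec2.
Context {R : realType} {X : normedModType R}.

Lemma good0 (G : set (X * R)) x r : goodG G -> G (x, r) -> G (0, 0).
Proof. by move=> [_ _ sc _] /(sc 0); rewrite scale0r mul0r. Qed.

Lemma goodB (G : set (X * R)) x r y s : goodG G -> G (x, r) -> G (y, s) ->
  G (x - y, r - s).
Proof.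
move=> gG Gx Gy; have [_ ad sc _] := gG.
have := sc (-1) _ _ Gy; rewrite scaleN1r mulN1r => Gy'.
exact: ad Gx Gy'.
Qed.

Definition extG (A : set (X * R)) (x0 : X) (c : R) : set (X * R) :=
  [set p | exists y r l, A (y, r) /\ p = (y + l *: x0, r + l * c)].

Lemma ext_good (A : set (X * R)) x0 : goodG A -> A (0, 0) ->
  ~ (exists r, A (x0, r)) -> exists c, goodG (extG A x0 c).
Proof.
move=> gA A00 nx0; have [fn ad sc dm] := gA.
pose E := [set z | exists y r, A (y, r) /\ z = r - `|y - x0|].
have key y r y' r' : A (y, r) -> A (y', r') -> r - `|y - x0| <= `|y' + x0| - r'.
  move=> Ay Ay'; have := dm _ _ (ad _ _ _ _ Ay Ay').
  have : `|y + y'| <= `|y - x0| + `|y' + x0|.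
    have -> : y + y' = (y - x0) + (y' + x0) by rewrite addrACA addNr addr0.
    exact: ler_normD.
  by move=> h1 h2; have := le_trans h2 h1; lra.
have E0 : E !=set0 by exists (0 - `|0 - x0|); exists 0, 0.
have Eub : ubound E (`|0 + x0| - 0).
  by move=> z [y [r [Ay ->]]]; exact: key Ay A00.
have hs : has_sup E by split => //; exists (`|0 + x0| - 0).
pose c := sup E.
have L y r : A (y, r) -> r - `|y - x0| <= c.
  by move=> Ay; apply: sup_upper_bound => //; exists y, r.
have U y r : A (y, r) -> c <= `|y + x0| - r.
  by move=> Ay; apply: ge_sup => // z [y' [r' [Ay' ->]]]; exact: key Ay' Ay.
exists c; split.
- move=> x s s' [y [r [l [Ay [-> ->]]]]] [y' [r' [l' [Ay' [e ->]]]]].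
  have [ll'|ll'] := eqVneq l l'.
    subst l'; move: e; move/addIr => yy; subst y'.
    by rewrite (fn _ _ _ Ay Ay').
  exfalso; apply: nx0.
  have e' : (l - l') *: x0 = y' - y.
    rewrite scalerBl.
    have -> : l *: x0 = y' + l' *: x0 - y by rewrite -e addrAC subrr add0r.
    by rewrite addrAC addrK.
  have Hl : l - l' != 0 by rewrite subr_eq0.
  exists ((l - l')^-1 * (r' - r)).
  have := sc ((l - l')^-1) _ _ (goodB gA Ay' Ay); rewrite -e' scalerA mulVf //.
  by rewrite scale1r.
- move=> x s x' s' [y [r [l [Ay [-> ->]]]]] [y' [r' [l' [Ay' [-> ->]]]]].
  exists (y + y'), (r + r'), (l + l'); split; first exact: ad.
  congr (_, _); first by rewrite scalerDl addrACA.
  by rewrite mulrDl addrACA.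
- move=> k x s [y [r [l [Ay [-> ->]]]]].
  exists (k *: y), (k * r), (k * l); split; first exact: sc.
  by congr (_, _); rewrite ?scalerDr ?scalerA // mulrDr mulrA.
- move=> x s [y [r [l [Ay [[-> ->]]]]]].
  have [l0|l0|->] := ltgtP l 0; last first.
  + by rewrite scale0r mul0r !addr0; exact: dm Ay.
  + have := U _ _ (sc (l^-1) _ _ Ay).
    have -> : l^-1 *: y + x0 = l^-1 *: (y + l *: x0).
      by rewrite scalerDr scalerA mulVf ?gt_eqF // scale1r.
    rewrite normrZ gtr0_norm ?invr_gt0 // => h.
    have := ler_wpM2l (ltW l0) h; rewrite mulrBr !mulrA mulfV ?gt_eqF // !mul1r.
    lra.
  +
    pose m := - l; have m0 : 0 < m by rewrite /m oppr_gt0.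
    have := L _ _ (sc (m^-1) _ _ Ay).
    have -> : m^-1 *: y - x0 = m^-1 *: (y + l *: x0).
      have ml : m^-1 * l = -1.
        by rewrite -[l]opprK -/m mulrN mulVf ?gt_eqF.
      by rewrite scalerDr scalerA ml scaleN1r.
    rewrite normrZ gtr0_norm ?invr_gt0 // => h.
    have := ler_wpM2l (ltW m0) h; rewrite mulrBr !mulrA mulfV ?gt_eqF // !mul1r.
    rewrite /m; lra.
Qed.

End HBsec2.
Section HBsec3.
Context {R : realType} {X : normedModType R}.

Lemma HB_exists (a : X) : a != 0 -> exists f : X -> R,
  [/\ (forall u v, f (u + v) = f u + f v), (forall (k : R) u, f (k *: u) = k * f u),
   continuous f & f a != 0].
Proof.
move=> a0.
have [A [PA Amax]] := @Zorn_bigcup (X * R)%type (PG a) (@PG_chain R X a).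
pose G0 : set (X * R) := [set p | exists k : R, p = (k *: a, k * `|a|)].
have gG0 : goodG G0.
  split.
  - move=> x r r' [k [-> ->]] [k' [e ->]].
    have : (k - k') *: a = 0 by rewrite scalerBl e subrr.
    by move/eqP; rewrite scaler_eq0 (negbTE a0) orbF subr_eq0 => /eqP ->.
  - move=> x r y s [k [-> ->]] [k' [-> ->]]; exists (k + k').
    by rewrite scalerDl mulrDl.
  - move=> k x r [k' [-> ->]]; exists (k * k'); by rewrite scalerA mulrA.
  - move=> x r [k [-> ->]]; rewrite normrZ; apply: ler_wpM2r => //.
    exact: ler_norm.
have G0a : G0 (a, `|a|) by exists 1; rewrite scale1r mul1r.
have [Ae|[gA Aa]] := PA.
  exfalso; apply: (Amax G0); last by right.
  rewrite Ae; split; first exact: sub0set.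
  by move=> /(_ _ G0a).
have A00 := good0 gA Aa.
have tot x0 : exists r, A (x0, r).
  apply: contrapT => nx0.
  have [c gE] := ext_good gA A00 nx0.
  apply: (Amax (extG A x0 c)); last first.
    right; split => //; exists a, `|a|, 0; split => //.
    by rewrite scale0r mul0r !addr0.
  split.
    move=> [y r] Ayr; exists y, r, 0; split => //.
    by rewrite scale0r mul0r !addr0.
  move=> h; apply: nx0; exists c; apply: h.
  by exists 0, 0, 1; split => //; rewrite add0r scale1r add0r mul1r.
have [fn ad sc dm] := gA.
pose f x := xget 0 [set r | A (x, r)].
have Af x : A (x, f x) by exact: (@xgetPex _ 0 [set r | A (x, r)] (tot x)).
have fD u v : f (u + v) = f u + f v.
  by apply: (fn (u + v)); [exact: Af | exact: ad].
have fZ k u : f (k *: u) = k * f u.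
  by apply: (fn (k *: u)); [exact: Af | exact: sc].
have fB u v : f (u - v) = f u - f v.
  by rewrite fD -scaleN1r fZ mulN1r.
have fle u : `|f u| <= `|u|.
  rewrite ler_norml dm ?Af // andbT.
  have := dm _ _ (Af (- u)); rewrite -scaleN1r fZ normrZ normrN1 mul1r.
  by rewrite mulN1r lerNl.
exists f; split => //.
- move=> x; apply/cvgrPdist_lt => e e0.
  near=> y; rewrite -fB; apply: le_lt_trans (fle _) _.
  near: y; exact: (@cvgr_dist_lt _ _ _ (nbhs x) _ id x (@cvg_id _ _)).
- have := fn _ _ _ (Af a) Aa => ->.
  by rewrite normr_eq0.
Unshelve. all: by end_near.
Qed.

Lemma weak_sep (a b : X) :
  (forall f : X -> R, (forall u v, f (u + v) = f u + f v) ->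
     (forall (k : R) u, f (k *: u) = k * f u) -> continuous f -> f a = f b) ->
  a = b.
Proof.
move=> H; apply/eqP; rewrite -subr_eq0; apply: contraT => ab.
have [f [fD fZ fc fab]] := HB_exists ab.
move: fab; rewrite fD -scaleN1r fZ mulN1r (H f fD fZ fc) subrr.
by rewrite eqxx.
Qed.

End HBsec3.
Lemma evP (P : nat -> Prop) : (\forall n \near \oo, P n) -> exists N, forall n, (N <= n)%N -> P n.
Proof. by move=> [N _ HN]; exists N => n Nn; apply: HN. Qed.
Lemma evI (P : nat -> Prop) N : (forall n, (N <= n)%N -> P n) -> \forall n \near \oo, P n.
Proof. by move=> H; exists N => // n; apply: H. Qed.
Lemma pinfP {R : realType} (P : R -> Prop) : (\forall t \near +oo, P t) -> exists M : R, forall t, M < t -> P t.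
Proof. by move=> [M [_ HM]]; exists M. Qed.
Lemma pinfI {R : realType} (P : R -> Prop) (M : R) : (forall t, M < t -> P t) -> \forall t \near +oo, P t.
Proof. by move=> H; exists M; split => //; exact: num_real. Qed.
Section Topo.
Context {R : realType} {X : normedModType R}.

Definition tb (S : set X) := forall e, 0 < e ->
  exists l : seq X, forall x, S x -> exists2 c, c \in l & `|x - c| < e.

Definition clus (u : nat -> X) (y : X) :=
  forall e, 0 < e -> forall N, exists2 n, (N <= n)%N & `|y - u n| < e.

Lemma ultra_list T (F : set_system T) (UF : UltraFilter F) (P : X -> set T)
  (l : seq X) : F [set x | exists2 c, c \in l & P c x] -> exists c, F (P c).
Proof.
elim: l => [|c l IH] Fl.
  have : F set0 by apply: filterS Fl => x [].
  by move/filter_ex => [].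
have [Fc|FnC] := in_ultra_setVsetC (P c) UF; first by exists c.
apply: IH; apply: filterS (filterI Fl FnC) => x [[c']].
rewrite in_cons => /orP[/eqP -> //|cl Pc _]; by exists c'.
Qed.

Lemma compact_tb (K : set X) : compact K -> tb K.
Proof.
rewrite compact_cover => cK e e0.
have cov0 : K `<=` cover K (fun c => ball c e).
  by move=> x Kx; exists x => //; exact: ballxx.
have [D' D'K cov] := cK X K (fun c => ball c e) (fun _ _ => @ball_open _ _ _ _) cov0.
exists (finmap.enum_fset D') => x /cov [c /= cD' bc]; exists c => //.
by move: bc; rewrite -ball_normE /= distrC.
Qed.

Lemma clus_of_precompact (u : nat -> X) : precompact (range u) ->
  exists y, clus u y.
Proof.
rewrite precompactE => cK.
have PF : ProperFilter (u @ \oo) by exact: fmap_proper_filter.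
have [|y [Ky cy]] := cK (u @ \oo) PF.
  change (\oo [set n | closure (range u) (u n)]).
  by apply: filterE => n; apply: subset_closure; exists n.
exists y => e e0 N.
have := cy [set x | exists2 n, (N <= n)%N & x = u n] (ball y e).
case.
- change (\oo [set n | exists2 m, (N <= m)%N & u n = u m]).
  by exists N => // n /= Nn; exists n.
- exact: nbhsx_ballx.
move=> z [[n Nn ->]]; rewrite -ball_normE /= => h; by exists n.
Qed.

Lemma sep_not_precompact (u : nat -> X) d : 0 < d ->
  (forall n m, n <> m -> d <= `|u n - u m|) -> ~ precompact (range u).
Proof.
move=> d0 sep /clus_of_precompact [y cy].
have d2 : 0 < d / 2 by rewrite divr_gt0.
have [n _ hn] := cy _ d2 0%N.
have [m nm hm] := cy _ d2 n.+1.
have : n <> m by move=> e; move: nm; rewrite e ltnn.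
move/sep; apply/negP; rewrite -ltNge.
have -> : u n - u m = (y - u m) - (y - u n) by rewrite opprB [RHS]addrC [RHS]addrA subrK.
apply: le_lt_trans (ler_normB _ _) _.
by rewrite [d]splitr ltrD.
Qed.

Lemma greedy (S : nat -> set X) d :
  (forall n (l : seq X), exists x, S n x /\ forall c, c \in l -> d <= `|x - c|) ->
  exists u : nat -> X, (forall n, S n (u n)) /\
    (forall n m, n <> m -> d <= `|u n - u m|).
Proof.
move=> H.
have [pick Hp] := choice (fun nl : nat * seq X => H nl.1 nl.2).
pose fix f n := if n is n'.+1 then pick (n', f n') :: f n' else [::].
exists (fun n => pick (n, f n)); split.
  by move=> n; have [] := Hp (n, f n).
have mem m n : (m < n)%N -> pick (m, f m) \in f n.
  elim: n => // n IH; rewrite ltnS leq_eqVlt => /orP[/eqP ->|mn].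
    by rewrite /= in_cons eqxx.
  by rewrite /= in_cons IH ?orbT.
have lt m n : (m < n)%N -> d <= `|pick (n, f n) - pick (m, f m)|.
  by move=> mn; have [_ ] := Hp (n, f n); apply; exact: mem.
move=> n m /eqP; rewrite neq_ltn => /orP[nm|mn]; last exact: lt.
by rewrite distrC; exact: lt.
Qed.

Lemma clus_sub (u : nat -> X) y : clus u y ->
  exists g : nat -> nat, (forall k, (k <= g k)%N) /\ (u \o g) @ \oo --> y.
Proof.
move=> cy.
have H k : exists n, (k <= n)%N /\ `|y - u n| < k.+1%:R^-1.
  have k0 : 0 < k.+1%:R^-1 :> R by rewrite invr_gt0.
  by have [n kn h] := cy _ k0 k; exists n.
have [g Hg] := choice H.
exists g; split; first by move=> k; have [] := Hg k.
apply/cvgrPdist_lt => e e0.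
near=> k; apply: lt_trans (proj2 (Hg k)) _.
near: k; exact: (near_infty_natSinv_lt (PosNum e0)).
Unshelve. all: by end_near.
Qed.

End Topo.

Section Topo2.
Context {R : realType} {X : completeNormedModType R}.

Lemma tb_precompact (S : set X) : tb S -> precompact S.
Proof.
move=> tbS; rewrite precompactE compact_ultra => F UF Fcl.
have PF : ProperFilter F by exact: ultra_proper.
have cF : cauchy F.
  apply: cauchy_exP => e e0.
  have e2 : 0 < e / 2 by rewrite divr_gt0.
  have [l hl] := tbS _ e2.
  apply: (ultra_list UF (P := fun c => ball c e) (l := l)).
  apply: filterS Fcl => x clx.
  have nb : nbhs x (ball x (e / 2)) by apply: nbhsx_ballx.
  have [s [Ss bs]] := clx (ball x (e / 2)) nb.
  have [c cl hc] := hl s Ss; exists c => //.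
  rewrite -ball_normE /=.
  have -> : c - x = - (s - c) + (s - x) by rewrite opprB addrA subrK.
  apply: le_lt_trans (ler_normD _ _) _; rewrite normrN [e]splitr ltrD //.
  by move: bs; rewrite -ball_normE /= distrC.
have Fp := @cauchy_cvg X F PF cF.
exists (lim F); split => //.
have cc : closure S = closure (closure S).
  by apply/closure_id; exact: closed_closure.
rewrite cc.
move=> B /Fp FB; have [z [? ?]] := filter_ex (filterI Fcl FB).
by exists z.
Qed.

End Topo2.
Section Topo3.
Context {R : realType} {X : normedModType R}.

Lemma distlt (u : nat -> X) q e : u @ \oo --> q -> 0 < e ->
  \forall n \near \oo, `|q - u n| < e.
Proof. by move=> uq e0; apply: cvgr_dist_lt. Qed.

Lemma cvg_clus (u : nat -> X) q : u @ \oo --> q -> clus u q.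
Proof.
move=> uq e e0 N; have [M HM] := evP (distlt uq e0).
by exists (maxn N M); [rewrite leq_maxl | apply: HM; rewrite leq_maxr].
Qed.

Lemma comp_cvg (u : nat -> X) (q : X) (h : nat -> nat) : u @ \oo --> q ->
  (forall k, (k <= h k)%N) -> u (h k) @[k --> \oo] --> q.
Proof.
move=> uq hk; apply/cvgrPdist_lt => e e0.
have [M HM] := evP (distlt uq e0).
by exists M => // k /= Mk; apply: HM; exact: leq_trans Mk (hk k).
Qed.

Lemma clus_subP (u : nat -> X) y (P : nat -> Prop) N0 : clus u y ->
  (forall n, (N0 <= n)%N -> P n) ->
  exists g : nat -> nat, (forall k, (k <= g k)%N /\ P (g k)) /\ (u \o g) @ \oo --> y.
Proof.
move=> cy HP.
have H k : exists n, ((k <= n)%N /\ P n) /\ `|y - u n| < k.+1%:R^-1.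
  have k0 : 0 < k.+1%:R^-1 :> R by rewrite invr_gt0.
  have [n kn h] := cy _ k0 (maxn k N0); exists n; split => //.
  split; first by apply: leq_trans kn; rewrite leq_maxl.
  by apply: HP; apply: leq_trans kn; rewrite leq_maxr.
have [g Hg] := choice H.
exists g; split; first by move=> k; have [] := Hg k.
apply/cvgrPdist_lt => e e0.
near=> k; apply: lt_trans (proj2 (Hg k)) _.
near: k; exact: (near_infty_natSinv_lt (PosNum e0)).
Unshelve. all: by end_near.
Qed.

Lemma weak_clus_eq (a : nat -> X) p q : weak_cvg a p -> clus a q -> p = q.
Proof.
move=> wa ca; apply: weak_sep => f fD fZ fc.
have fB u v : f (u - v) = f u - f v by rewrite fD -scaleN1r fZ mulN1r.
apply/eqP; rewrite -subr_eq0 -normr_le0; apply/ler_addgt0Pr => e e0.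
rewrite add0r.
have e2 : 0 < e / 2 by rewrite divr_gt0.
have : \forall n \near \oo, `|f p - f (a n)| < e / 2.
  by apply: cvgr_dist_lt; [exact: (wa f fD fZ fc)|].
move=> /evP [N HN].
have : \forall y \near q, `|f q - f y| < e / 2 by apply: cvgr_dist_lt; [exact: fc|].
move=> /nbhs_ballP [d d0 Hd].
have [n Nn hn] := ca _ d0 N.
have h1 : `|f q - f (a n)| < e / 2.
  by apply: (Hd (a n)); rewrite -ball_normE.
have h2 := HN n Nn.
have -> : f p - f q = (f p - f (a n)) - (f q - f (a n)) by rewrite opprB addrA subrK.
apply: le_trans (ler_normB _ _) _; apply: ltW.
by rewrite [e]splitr ltrD.
Qed.

End Topo3.

Lemma cvgy_comp {R : realType} (tn : nat -> R) (g : nat -> nat) :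
  tn n @[n --> \oo] --> +oo -> (forall k, (k <= g k)%N) -> tn (g k) @[k --> \oo] --> +oo.
Proof.
move=> ht hg; apply/cvgryPge => A.
have [N HN] := evP (cvgry_ge ht A).
by exists N => // k /= Nk; apply: HN; exact: leq_trans Nk (hg k).
Qed.

Lemma cvgy_add {R : realType} (tn : nat -> R) (c : R) :
  tn n @[n --> \oo] --> +oo -> (tn n + c) @[n --> \oo] --> +oo.
Proof.
move=> ht; apply/cvgryPge => A.
have [N HN] := evP (cvgry_ge ht (A - c)).
by exists N => // k /= Nk; rewrite -lerBlDr; exact: HN.
Qed.

Lemma cvgy_addl {R : realType} (tn : nat -> R) (c : R) :
  tn n @[n --> \oo] --> +oo -> (c + tn n) @[n --> \oo] --> +oo.
Proof.
move=> ht; apply/cvgryPge => A.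
have [N HN] := evP (cvgry_ge ht (A - c)).
by exists N => // k /= Nk; rewrite addrC -lerBlDr; exact: HN.
Qed.

Lemma tri4 {R : realType} {X : normedModType R} (a b c d : X) :
  `|a - d| <= `|a - b| + `|b - c| + `|c - d|.
Proof.
have -> : a - d = (a - b) + (b - c) + (c - d) by rewrite !addrA !subrK.
by apply: le_trans (ler_normD _ _) _; rewrite lerD2r ler_normD.
Qed.
Section Kap.
Context {R : realType} {X : normedModType R}.
Local Open Scope ereal_scope.

Lemma diam_le (A : set X) (r : R) :
  (forall x y, A x -> A y -> (`|x - y| <= r)%R) -> diam A <= r%:E.
Proof.
move=> H; apply/ereal_supP => _ [x Ax [y Ay <-]].
by rewrite lee_fin; exact: H.
Qed.

Lemma diam_ge (A : set X) x y : A x -> A y -> (`|x - y|)%:E <= diam A.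
Proof.
by move=> Ax Ay; apply: ereal_sup_ubound; exists x => //; exists y.
Qed.

Lemma kappa_net (S : set X) (l : seq X) (r : R) : (0 < r)%R ->
  (forall x, S x -> exists2 c, c \in l & (`|x - c| < r)%R) ->
  kuratowski S <= (3 * r)%:E.
Proof.
move=> r0 H; apply: ereal_inf_lbound; exists (3 * r)%R => //.
split; first by rewrite mulr_gt0.
exists (size l), (fun i => ball (nth 0%R l i) r); split.
  move=> x /H [c cl xc]; exists (index c l); first by rewrite /= index_mem.
  by rewrite nth_index // -ball_normE /= distrC.
move=> i _; apply: le_lt_trans (diam_le (r := (2 * r)%R) _) _.
  move=> x y; rewrite -!ball_normE /= => hx hy.
  have -> : (x - y = - (nth 0%R l i - x) + (nth 0%R l i - y))%R.
    by rewrite opprB addrA subrK.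
  apply: le_trans (ler_normD _ _) _; rewrite normrN.
  by rewrite mulr2n mulrDl mul1r ltW // ltrD.
by rewrite lte_fin ltr_pM2r // ltr_nat.
Qed.

Lemma kappa_mono (A B : set X) : A `<=` B -> kuratowski A <= kuratowski B.
Proof.
move=> AB; apply: ereal_inf_le_tmp => _ [d [d0 [n [U [cov dU]]]] <-].
exists d => //; split => //; exists n, U; split => //.
exact: subset_trans cov.
Qed.

Lemma kappa_tb (S : set X) (e : R) : kuratowski S < e%:E ->
  exists l : seq X, forall x, S x -> exists2 c, c \in l & (`|x - c| < e)%R.
Proof.
move=> /ereal_inf_ltP [_ [d [d0 [n [U [cov dU]]]] <-]]; rewrite lte_fin => de.
exists [seq xget 0%R (U i) | i <- iota 0 n] => x /cov [i /= ilt Ux].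
exists (xget 0%R (U i)).
  by apply/mapP; exists i => //; rewrite mem_iota add0n.
have Uc : U i (xget 0%R (U i)) by exact: xgetI Ux.
have := le_lt_trans (diam_ge Ux Uc) (dU _ ilt).
by rewrite lte_fin => h; exact: lt_trans h de.
Qed.

End Kap.
Section Dyn1.
Context {R : realType} {X : completeNormedModType R} {Sigma : Type}.
Variables (theta : R -> Sigma -> Sigma) (phi : R -> Sigma -> X -> X) (Bs : Sigma -> set X).
Context (gf : is_group_flow theta) (coc : is_cocycle theta phi)
  (abs : pullback_absorbing theta phi Bs) (nest : nested theta Bs).

Definition Sp t s x := phi t (theta (- t) s) x.

Lemma theta_add a b s : theta (a + b) s = theta a (theta b s).
Proof. by case: gf => _ [_ h]; rewrite h. Qed.

Lemma theta0 s : theta 0 s = s.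
Proof. by case: gf => _ [h _]; rewrite h. Qed.

Lemma Sp_split s t sg x : 0 <= s -> s <= t ->
  Sp t sg x = Sp s sg (phi (t - s) (theta (- t) sg) x).
Proof.
move=> s0 st; rewrite /Sp.
have ts0 : 0 <= t - s by rewrite subr_ge0.
case: coc => _ h.
have -> : theta (- s) sg = theta (t - s) (theta (- t) sg).
  by rewrite -theta_add addrAC subrr add0r.
by rewrite -h // addrC subrK.
Qed.

Lemma Sp_shift t tau sg x : 0 <= t -> 0 <= tau ->
  phi t sg (Sp tau sg x) = Sp (t + tau) (theta t sg) x.
Proof.
move=> t0 tau0; case: coc => _ h.
have e1 : theta (- (t + tau)) (theta t sg) = theta (- tau) sg.
  by rewrite -theta_add opprD addrAC addNr add0r.
have e2 : theta tau (theta (- tau) sg) = sg by rewrite -theta_add subrr theta0.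
by rewrite /Sp e1 h // e2.
Qed.

Lemma ABS B sg s : bnd B -> 0 <= s -> exists T, 0 <= T /\
  forall t x, s + T <= t -> B x -> exists z, Bs sg z /\ Sp t sg x = Sp s sg z.
Proof.
move=> bB s0; have [_ ha] := abs.
have [T [T0 HT]] := ha (theta (- s) sg) B bB.
exists T; split => // t x sTt Bx.
have st : s <= t by apply: le_trans sTt; rewrite lerDl.
exists (phi (t - s) (theta (- t) sg) x); split; last exact: Sp_split.
apply: (nest s0); apply: (HT (t - s)); first by rewrite lerBrDl.
exists x => //; congr (phi _ _ _); rewrite -theta_add.
by rewrite opprB addrAC subrr add0r.
Qed.

Lemma bnd_range_sub (v : nat -> X) (B : set X) : bnd B -> (forall n, B (v n)) ->
  bnd (range v).
Proof. by move=> [M HM] Bv; exists M => _ [n _ <-]; exact: HM. Qed.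

Lemma K_AC : kappa_contracting theta phi -> asymptotically_compact theta phi.
Proof.
move=> K sg v tn bv tn0 tninf; apply: tb_precompact => e e0.
have e2 : 0 < e / 2 by rewrite divr_gt0.
have [T0 [T00 HT0]] := K (e / 2) sg (Bs sg) e2 (abs.1 sg).
have kl : (kuratowski (Sp T0 sg @` Bs sg) < e%:E)%E.
  apply: le_lt_trans (HT0 T0 (lexx _)) _.
  by rewrite lte_fin ltr_pdivrMr // ltr_pMr // ltr1n.
have [l hl] := kappa_tb kl.
have [T1 [T10 HT1]] := ABS sg bv T00.
have [N HN] := evP (cvgry_ge tninf (T0 + T1)).
exists ([seq Sp (tn n) sg (v n) | n <- iota 0 N] ++ l) => _ [n _ <-].
case: (ltnP n N) => nN.
  exists (Sp (tn n) sg (v n)); last by rewrite subrr normr0.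
  rewrite mem_cat; apply/orP; left; apply/mapP; exists n => //.
  by rewrite mem_iota add0n.
have [z [Bz ez]] := HT1 (tn n) (v n) (HN n nN) (ex_intro2 _ _ n I erefl).
have [c cl hc] := hl (Sp T0 sg z) (ex_intro2 _ _ z Bz erefl).
exists c; first by rewrite mem_cat cl orbT.
by move: hc; rewrite -ez.
Qed.

Lemma AC_K : asymptotically_compact theta phi -> kappa_contracting theta phi.
Proof.
move=> AC e sg B e0 bB.
have e3 : 0 < e / 3 by rewrite divr_gt0.
have e3e : e = 3 * (e / 3) by rewrite mulrC divfK.
suff [n Hn] : exists n : nat, (kuratowski (Sp n%:R sg @` Bs sg) <= e%:E)%E.
  have [T1 [T10 HT1]] := ABS sg bB (ler0n _ n).
  exists (n%:R + T1); split; first by rewrite addr_ge0.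
  move=> t tT; apply: le_trans Hn; apply: kappa_mono => _ [x Bx <-].
  have [z [Bz ez]] := HT1 t x tT Bx.
  by exists z => //; exact: (esym ez).
apply: contrapT => Hn.
have nnet n (l : seq X) : exists x, (Sp n%:R sg @` Bs sg) x /\
    forall c, c \in l -> e / 3 <= `|x - c|.
  apply: contrapT => H; apply: Hn; exists n; rewrite e3e.
  apply: (kappa_net (l := l) e3) => x Sx; apply: contrapT => nx; apply: H.
  exists x; split => // c cl; rewrite leNgt; apply/negP => lt.
  by apply: nx; exists c.
have [u [Su sepu]] := greedy nnet.
have H' n : exists z, Bs sg z /\ Sp n%:R sg z = u n.
  by case: (Su n) => z ? ?; exists z.
have [z Hz] := choice H'.
apply: (sep_not_precompact e3 sepu).
have bz : bnd (range z) by apply: (bnd_range_sub (abs.1 sg)) => n; exact: (Hz n).1.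
have := AC sg z (fun n => n%:R) bz (fun n => ler0n _ n) cvgr_idn.
have -> // : u = fun n => phi n%:R (theta (- n%:R) sg) (z n).
by apply: funext => n; rewrite -(Hz n).2.
Qed.

Lemma ATT_K : (exists A, pullback_attractor theta phi A) -> kappa_contracting theta phi.
Proof.
move=> [A [Ane [Ainv Aatt]]] e sg B e0 bB.
pose r := e / 3.
have r0 : 0 < r by rewrite divr_gt0.
have r2 : 0 < r / 2 by rewrite divr_gt0.
have r4 : 0 < r / 4 by rewrite divr_gt0.
have e3e : e = 3 * r by rewrite /r mulrC divfK.
have [l hl] := compact_tb (Ane sg).2 r2.
have [M HM] := pinfP (Aatt sg B bB (r / 4) r4).
exists (Num.max (M + 1) 0); split; first by rewrite le_max lexx orbT.
move=> t Mt.
have Mt' : M < t.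
  apply: lt_le_trans Mt; rewrite lt_max; apply/orP; left.
  by rewrite ltrDl.
have hd := HM t Mt'.
rewrite e3e; apply: (kappa_net (l := l) r0) => _ [x Bx <-].
set a := phi t (theta (- t) sg) x.
have ha : (ereal_inf [set (`|a - c|)%:E | c in A sg] < (r / 2)%:E)%E.
  apply: le_lt_trans (le_trans _ hd) _.
    by apply: ereal_sup_ubound; exists a => //; exists x.
  by rewrite lte_fin; lra.
move/ereal_inf_ltP: ha => [_ [c Ac <-]]; rewrite lte_fin => hc.
have [c' cl hc'] := hl c Ac.
exists c' => //; change (`|a - c'| < r).
have -> : a - c' = (a - c) + (c - c') by rewrite addrA subrK.
apply: le_lt_trans (ler_normD _ _) _.
by rewrite [r]splitr ltrD.
Qed.
Definition Aset sg y := exists (v : nat -> X) (tn : nat -> R),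
  [/\ bnd (range v), (forall n, 0 <= tn n), tn n @[n --> \oo] --> +oo &
      clus (fun n => Sp (tn n) sg (v n)) y].

Lemma clusA (AC : asymptotically_compact theta phi) sg v tn :
  bnd (range v) -> (forall n, 0 <= tn n) -> tn n @[n --> \oo] --> +oo ->
  exists y, clus (fun n => Sp (tn n) sg (v n)) y /\ Aset sg y.
Proof.
move=> bv t0 ti; have [y cy] := clus_of_precompact (AC sg v tn bv t0 ti).
by exists y; split => //; exists v, tn; split.
Qed.

Lemma Ared sg y s e : Aset sg y -> 0 <= s -> 0 < e ->
  exists z, Bs sg z /\ `|y - Sp s sg z| < e.
Proof.
move=> [v [tn [bv t0 ti cy]]] s0 e0.
have [T1 [_ HT1]] := ABS sg bv s0.
have [N HN] := evP (cvgry_ge ti (s + T1)).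
have [n Nn hn] := cy e e0 N.
have [z [Bz ez]] := HT1 (tn n) (v n) (HN n Nn) (ex_intro2 _ _ n I erefl).
by exists z; split => //; rewrite -ez.
Qed.

Lemma AC_ATT : norm_to_weak phi -> asymptotically_compact theta phi ->
  exists A, pullback_attractor theta phi A.
Proof.
move=> ntw AC; exists Aset; split; [|split].
- move=> sg; split.
    have bv : bnd (range (fun _ : nat => 0 : X)).
      by exists 0 => _ [n _ <-]; rewrite normr0.
    have [y [_ Ay]] := clusA AC sg bv (fun n => ler0n _ n) cvgr_idn.
    by exists y.
  have clA : closed (Aset sg).
    move=> y cly.
    have H (k : nat) : exists z, Bs sg z /\ `|y - Sp k%:R sg z| < k.+1%:R^-1.
      have d0 : 0 < k.+1%:R^-1 / 2 :> R by rewrite divr_gt0 // invr_gt0.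
      have nb : nbhs y (ball y (k.+1%:R^-1 / 2)) by apply: nbhsx_ballx.
      have [y' [Ay' by']] := cly _ nb.
      have [z [Bz hz]] := Ared Ay' (ler0n _ k) d0.
      exists z; split => //.
      move: by'; rewrite -ball_normE /= => hy'.
      have -> : y - Sp k%:R sg z = (y - y') + (y' - Sp k%:R sg z).
        by rewrite addrA subrK.
      apply: le_lt_trans (ler_normD _ _) _.
      by rewrite [X in _ < X]splitr ltrD.
    have [z Hz] := choice H.
    exists z, (fun n => n%:R); split.
    + by apply: (bnd_range_sub (abs.1 sg)) => n; exact: (Hz n).1.
    + by move=> n; exact: ler0n.
    + exact: cvgr_idn.
    + move=> e e0 N.
      have [M HM] := evP (near_infty_natSinv_lt (PosNum e0)).
      exists (maxn N M); first by rewrite leq_maxl.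
      by apply: lt_trans (Hz _).2 (HM _ (leq_maxr _ _)).
  have tbA : tb (Aset sg).
    move=> e e0; apply: contrapT => ntb.
    have nnet (n : nat) (l : seq X) :
        exists x, Aset sg x /\ forall c, c \in l -> e <= `|x - c|.
      apply: contrapT => H; apply: ntb; exists l => x Ax.
      apply: contrapT => nx; apply: H; exists x; split => // c cl.
      by rewrite leNgt; apply/negP => lt; apply: nx; exists c.
    have [y [Ay sepy]] := greedy nnet.
    have e4 : 0 < e / 4 by rewrite divr_gt0.
    have e2 : 0 < e / 2 by rewrite divr_gt0.
    have H (n : nat) : exists z, Bs sg z /\ `|y n - Sp n%:R sg z| < e / 4.
      exact: Ared (Ay n) (ler0n _ n) e4.
    have [z Hz] := choice H.
    have bz : bnd (range z).
      by apply: (bnd_range_sub (abs.1 sg)) => n; exact: (Hz n).1.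
    apply: (sep_not_precompact (u := fun n => Sp n%:R sg (z n)) e2).
      move=> n m nm; have := sepy n m nm.
      have := tri4 (y n) (Sp n%:R sg (z n)) (Sp m%:R sg (z m)) (y m).
      have h1 := (Hz n).2; have h2 := (Hz m).2; rewrite distrC in h2.
      move=> t4 s4; lra.
    exact: (AC sg z (fun n => n%:R) bz (fun n => ler0n _ n) cvgr_idn).
  by rewrite -precompact_closed //; exact: tb_precompact.
- move=> t sg t0; apply/seteqP; split.
  + move=> _ [y [v [tn [bv tn0 ti cy]]] <-].
    have [g [hg ug]] := clus_subP (P := fun _ => True) (N0 := 0%N) cy (fun _ _ => I).
    have hg' k : (k <= g k)%N := (hg k).1.
    have bvg : bnd (range (fun k => v (g k))).
      by apply: (bnd_range_sub bv) => k; exists (g k).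
    have tg0 k : 0 <= t + tn (g k) by rewrite addr_ge0.
    have tgi := cvgy_addl t (cvgy_comp ti hg').
    have [w' [cw Aw']] := clusA AC (theta t sg) bvg tg0 tgi.
    suff -> : phi t sg y = w' by [].
    apply: (weak_clus_eq _ cw).
    have := ntw t sg (fun k => Sp (tn (g k)) sg (v (g k))) y t0 ug.
    have -> // : (fun n => phi t sg (Sp (tn (g n)) sg (v (g n)))) =
        (fun n => Sp (t + tn (g n)) (theta t sg) (v (g n))).
    by apply: funext => n; rewrite Sp_shift.
  + move=> w' [v [tn [bv tn0 ti cw]]].
    have [N HN] := evP (cvgry_ge ti t).
    have [g [hg wg]] := clus_subP (P := fun n => t <= tn n) cw HN.
    have hg' k : (k <= g k)%N := (hg k).1.
    have tg0 k : 0 <= tn (g k) - t by rewrite subr_ge0; exact: (hg k).2.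
    have uE k : phi t sg (Sp (tn (g k) - t) sg (v (g k))) =
        Sp (tn (g k)) (theta t sg) (v (g k)).
      by rewrite Sp_shift // [t + _]addrC subrK.
    have bvg : bnd (range (fun k => v (g k))).
      by apply: (bnd_range_sub bv) => k; exists (g k).
    have tgi := cvgy_add (- t) (cvgy_comp ti hg').
    have [y [cy Ay]] := clusA AC sg bvg tg0 tgi.
    exists y => //.
    have [h [hh uh]] := clus_subP (P := fun _ => True) (N0 := 0%N) cy (fun _ _ => I).
    apply: (weak_clus_eq (a := fun j => phi t sg (Sp (tn (g (h j)) - t) sg (v (g (h j)))))).
      exact: (ntw t sg (fun j => Sp (tn (g (h j)) - t) sg (v (g (h j)))) y t0 uh).
    apply: cvg_clus.
    have -> : (fun j => phi t sg (Sp (tn (g (h j)) - t) sg (v (g (h j))))) =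
        (fun j => Sp (tn (g (h j))) (theta t sg) (v (g (h j)))).
      by apply: funext => j; rewrite uE.
    exact: (comp_cvg wg (fun j => (hh j).1)).
- move=> sg B bB e e0.
  apply: contrapT => Hn.
  have H (n : nat) : exists tx : R * X, [/\ n%:R <= tx.1, B tx.2 &
      forall a, Aset sg a -> e < `|Sp tx.1 sg tx.2 - a|].
    apply: contrapT => Hc; apply: Hn; apply: (pinfI (M := n%:R)) => t nt.
    rewrite leNgt; apply/negP => /ereal_sup_gtP [_ [_ [x Bx <-] <-] hx].
    apply: Hc; exists (t, x); split => //=; first exact: ltW.
    move=> a Aa; rewrite -lte_fin; apply: lt_le_trans hx _.
    by apply: ereal_inf_lbound; exists a.
  have [tx Htx] := choice H.
  have tn0 n : 0 <= (tx n).1 by case: (Htx n) => h _ _; exact: le_trans (ler0n _ n) h.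
  have ti : (tx n).1 @[n --> \oo] --> +oo.
    apply/cvgryPge => A; have [M HM] := evP (cvgry_ge (@cvgr_idn R) A).
    by exists M => // n /= Mn; case: (Htx n) => h _ _; exact: le_trans (HM n Mn) h.
  have bx : bnd (range (fun n => (tx n).2)).
    by apply: (bnd_range_sub bB) => n; case: (Htx n).
  have [y [cy Ay]] := clusA AC sg bx tn0 ti.
  have [n _ hn] := cy e e0 0%N.
  case: (Htx n) => _ _ /(_ y Ay); rewrite distrC => h.
  by move: (lt_trans hn h); rewrite ltxx.
Qed.
End Dyn1.

Theorem theorem3p13 (R : realType) (X : completeNormedModType R) (Sigma : Type)
  (theta : R -> Sigma -> Sigma) (phi : R -> Sigma -> X -> X)
  (Bs : Sigma -> set X) :
  is_group_flow theta ->
  is_cocycle theta phi ->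
  norm_to_weak phi ->
  pullback_absorbing theta phi Bs ->
  nested theta Bs ->
  ((exists A : Sigma -> set X, pullback_attractor theta phi A) <->
     kappa_contracting theta phi) /\
  (kappa_contracting theta phi <-> asymptotically_compact theta phi).
Proof.
move=> gf coc ntw abs nest.
have KAC : kappa_contracting theta phi -> asymptotically_compact theta phi.
  by apply: (K_AC (Bs := Bs)).
have ACK : asymptotically_compact theta phi -> kappa_contracting theta phi.
  by apply: (AC_K (Bs := Bs)).
have ACATT : asymptotically_compact theta phi ->
    exists A, pullback_attractor theta phi A.
  by move=> ac; apply: (AC_ATT (Bs := Bs)).
split; split => //.
- exact: ATT_K.
- by move=> /KAC /ACATT.
Qed.
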